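(* Consider the covariate-adaptive randomization procedure described in the context with $I\ge1$ covariates, covariate $i$ having $m_i>1$ levels ($m=\prod_{i=1}^I m_i$ strata), and nonnegative weights $w_o$, $w_s$, $w_{m,i}$ ($i=1,\dots,I$) with $w_o+\sum_{i=1}^I w_{m,i}+w_s=1$. If \[ u^*:=\sum_{l=1}^{I}\ \sum_{1\le i_1<i_2<\dots<i_l\le I}\Big\{\Big(w_o+\sum_{j\in\{1,\dots,I\}\setminus\{i_1,\dots,i_l\}}w_{m,j}\Big)\prod_{t=1}^l (m_{i_t}-1)\Big\}<\frac12, \] then $(\mathbf{D}_n)_{n\ge1}$ is a positive recurrent Markov chain on $\mathbb{Z}^m$.
   Context: Two treatments, labelled 1 and 2. There are $I$ covariates, covariate $i$ having $m_i$ levels; a stratum is a profile $(k_1,\dots,k_I)$ with $1\le k_i\le m_i$. The margin $(i;k_i)$ is the set of patients whose $i$-th covariate is at level $k_i$. Patients arrive sequentially; their covariate profiles $Z_1,Z_2,\dots$ are i.i.d., $P(Z_j=(k_1,\dots,k_I))=p(k_1,\dots,k_I)\ge0$, summing to 1. For the first $n$ patients let $D_n$ be (number assigned to treatment 1) minus (number assigned to treatment 2) overall, $D_n(i;k_i)$ the same difference within margin $(i;k_i)$, and $D_n(k_1,\dots,k_I)$ within stratum $(k_1,\dots,k_I)$; $\mathbf{D}_n=[D_n(k_1,\dots,k_I)]\in\mathbb{Z}^m$. Procedure: fix the weights above and $0<q<p<1$ with $p+q=1$. Patient 1 gets treatment 1 with probability $1/2$. For $n>1$, if patient $n$ is in stratum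 $(k_1^*,\dots,k_I^* )$, let $\mathit{Imb}_n^{(1)}=w_o(D_{n-1}+1)^2+\sum_{i=1}^I w_{m,i}(D_{n-1}(i;k_i^* )+1)^2+w_s(D_{n-1}(k_1^*,\dots,k_I^* )+1)^2$ and $\mathit{Imb}_n^{(2)}$ the same with $+1$ replaced by $-1$. Conditional on $Z_1,\dots,Z_n$ and previous assignments, patient $n$ is assigned treatment 1 with probability $q$ if $\mathit{Imb}_n^{(1)}>\mathit{Imb}_n^{(2)}$, $p$ if $\mathit{Imb}_n^{(1)}<\mathit{Imb}_n^{(2)}$, and $1/2$ otherwise. Under this procedure $(\mathbf{D}_n)_{n\ge1}$ is a Markov chain on $\mathbb{Z}^m$. *)

(* Defs.v *)
From HB Require Import structures.
From mathcomp Require Import all_boot all_order all_algebra.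
From mathcomp Require Import all_classical all_reals all_analysis.
Set Implicit Arguments. Unset Strict Implicit. Unset Printing Implicit Defensive.
Import Order.TTheory GRing.Theory Num.Theory.
Import numFieldNormedType.Exports.
Local Open Scope classical_set_scope.
Local Open Scope ring_scope.

(* Strata: profiles (k_1,...,k_I) with k_i a level of covariate i
   (levels are numbered 0 .. m_i - 1). *)
Definition stratum (I : nat) (m : 'I_I -> nat) : finType :=
  {dffun forall i : 'I_I, 'I_(m i)}.

(* A state of the chain: the vector D = [D(k)]_k in Z^m, m = #|stratum|. *)
Definition state (I : nat) (m : 'I_I -> nat) := {ffun stratum m -> int}.

Section Procedure.
Variables (R : realType) (I : nat) (m : 'I_I -> nat).
Variable (pr : stratum m -> R).
Variables (wo ws : R) (wm : 'I_I -> R).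
Variables (pb qb : R).

Definition Dall (D : state m) : int := \sum_k D k.
Definition Dmarg (D : state m) (i : 'I_I) (l : 'I_(m i)) : int :=
  \sum_(k : stratum m | k i == l) D k.
Arguments Dmarg D i l : clear implicits.

(* Imb^{(1)} (s = 1) and Imb^{(2)} (s = -1) for a new patient in stratum k *)
Definition imb (D : state m) (k : stratum m) (s : int) : R :=
  wo * ((Dall D + s)%:~R) ^+ 2
  + \sum_(i : 'I_I) wm i * ((Dmarg D i (k i) + s)%:~R) ^+ 2
  + ws * ((D k + s)%:~R) ^+ 2.

Definition prob1 (D : state m) (k : stratum m) : R :=
  let a := imb D k 1 in let b := imb D k (-1) in
  if b < a then qb else if a < b then pb else 1 / 2.

(* new state after a patient in stratum k gets treatment 1 (b = true)
   or treatment 2 (b = false) *)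
Definition step (D : state m) (k : stratum m) (b : bool) : state m :=
  [ffun k' => D k' + (if k' == k then (if b then 1 else -1) else 0)].

Definition trans_w (D : state m) (k : stratum m) (b : bool) : R :=
  pr k * (if b then prob1 D k else 1 - prob1 D k).

Fixpoint nstep (n : nat) (x y : state m) : R :=
  match n with
  | 0 => (x == y)%:R
  | n'.+1 => \sum_(k : stratum m) \sum_(b : bool) trans_w x k b * nstep n' (step x k b) y
  end.

(* first-passage probability f^{(n)}(x, y) = P_x(T_y = n),
   T_y = inf {n >= 1 : X_n = y} *)
Fixpoint fpass (n : nat) (x y : state m) : R :=
  match n with
  | 0 => 0
  | n'.+1 => \sum_(k : stratum m) \sum_(b : bool)
      trans_w x k b *
      (let z := step x k b in if z == y then (n' == 0%N)%:R else fpass n' z y)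
  end.

(* initial state D_0 = 0 (patient 1 is then assigned with probability 1/2,
   as the rule gives when all imbalances are equal) *)
Definition D0 : state m := [ffun => 0].

Definition pos_recurrent_state (y : state m) : Prop :=
  (series (fun n => fpass n y y) @ \oo --> (1 : R)) /\
  cvgn (series (fun n => n%:R * fpass n y y)).

Definition positive_recurrent_chain : Prop :=
  forall y : state m, (exists n, 0 < nstep n D0 y) -> pos_recurrent_state y.

End Procedure.

Definition ustar (R : realType) (I : nat) (m : 'I_I -> nat)
  (wo : R) (wm : 'I_I -> R) : R :=
  \sum_(S : {set 'I_I} | S != finset.set0)
     ((wo + \sum_(j : 'I_I | j \notin S) wm j) * \prod_(t in S) ((m t).-1)%:R).

(* Main.v *)
Require Import Defs.
From HB Require Import structures.
From mathcomp Require Import all_boot all_order all_algebra.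
From mathcomp Require Import all_classical all_reals all_analysis.
From mathcomp Require Import ring lra zify.
Import Order.TTheory GRing.Theory Num.Theory.
Import numFieldNormedType.Exports.
Local Open Scope ring_scope.

Section Drift.
Variables (R : realType) (I : nat) (m : 'I_I -> nat).
Variable pr : stratum m -> R.
Variables (wo ws : R) (wm : 'I_I -> R) (pb qb : R).
Hypotheses (hpr0 : forall k, 0 <= pr k) (hpr1 : \sum_k pr k = 1).
Hypotheses (hwo : 0 <= wo) (hws : 0 <= ws) (hwm : forall i, 0 <= wm i).
Hypothesis (hw1 : wo + \sum_i wm i + ws = 1).
Hypotheses (hq0 : 0 < qb) (hqp : qb < pb) (hp1 : pb < 1) (hpq : pb + qb = 1).

Definition sz (b : bool) : int := if b then 1 else -1.

Lemma sz2 b : ((sz b)%:~R : R) ^+ 2 = 1.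
Proof. by case: b => /=; rewrite ?mulrN1z ?sqrrN expr1n. Qed.

Lemma stepE (x : state m) k b k' :
  step x k b k' = x k' + (if k' == k then sz b else 0).
Proof. by rewrite /step ffunE. Qed.

Lemma Dall_step (x : state m) (k : stratum m) (b : bool) : Dall (step x k b) = Dall x + sz b.
Proof.
rewrite /Dall; under eq_bigr do rewrite stepE.
rewrite big_split /=; congr (_ + _).
rewrite (bigD1 k) //= eqxx big1 ?addr0 // => k' /negbTE -> //.
Qed.

Lemma Dmarg_step (x : state m) (k : stratum m) (b : bool) (i : 'I_I) (l : 'I_(m i)) :
  Dmarg (step x k b) l = Dmarg x l + (if l == k i then sz b else 0).
Proof.
rewrite /Dmarg; under eq_bigr do rewrite stepE.
rewrite big_split /=; congr (_ + _).
case: eqP => [->|ne].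
  rewrite (bigD1 k) //= eqxx big1 ?addr0 // => k' /andP [_ ne'].
  by rewrite (negbTE ne').
rewrite big1 // => k' /eqP e; case: eqP => // ek; by case: ne; rewrite -e ek.
Qed.

Definition Lr (x : state m) (k : stratum m) : R :=
  wo * (Dall x)%:~R + \sum_i wm i * (Dmarg x (k i))%:~R + ws * (x k)%:~R.

Definition Cq (x : state m) (k : stratum m) : R :=
  wo * (Dall x)%:~R ^+ 2 + \sum_i wm i * (Dmarg x (k i))%:~R ^+ 2
  + ws * (x k)%:~R ^+ 2.

Lemma imbE (x : state m) (k : stratum m) (s : int) : imb wo ws wm x k s =
  Cq x k + 2 * s%:~R * Lr x k + s%:~R ^+ 2 * (wo + \sum_i wm i + ws).
Proof.
rewrite /imb /Cq /Lr !intrD.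
have -> : \sum_i wm i * ((Dmarg x (k i) + s)%:~R) ^+ 2 =
  \sum_i wm i * (Dmarg x (k i))%:~R ^+ 2
  + 2 * s%:~R * \sum_i wm i * (Dmarg x (k i))%:~R
  + s%:~R ^+ 2 * \sum_i wm i.
  rewrite !mulr_sumr -!big_split /=; apply: eq_bigr => i _; rewrite intrD; ring.
ring.
Qed.

Lemma prob1E (x : state m) (k : stratum m) : prob1 wo ws wm pb qb x k =
  if 0 < Lr x k then qb else if Lr x k < 0 then pb else 1 / 2.
Proof.
rewrite /prob1 /= !imbE.
have e1 : ((-1 : int)%:~R : R) = -1 by rewrite mulrN1z.
rewrite e1.
have -> : (Cq x k + 2 * (-1) * Lr x k + (-1) ^+ 2 * (wo + \sum_i wm i + ws) <
   Cq x k + 2 * 1%:~R * Lr x k + 1%:~R ^+ 2 * (wo + \sum_i wm i + ws)) = (0 < Lr x k).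
  rewrite -subr_gt0.
  have -> : Cq x k + 2 * 1%:~R * Lr x k + 1%:~R ^+ 2 * (wo + \sum_i wm i + ws) -
    (Cq x k + 2 * (-1) * Lr x k + (-1) ^+ 2 * (wo + \sum_i wm i + ws)) = 4 * Lr x k.
    by rewrite (_ : 1%:~R = 1 :> R) //; ring.
  by rewrite pmulr_rgt0.
have -> : (Cq x k + 2 * 1%:~R * Lr x k + 1%:~R ^+ 2 * (wo + \sum_i wm i + ws) <
   Cq x k + 2 * (-1) * Lr x k + (-1) ^+ 2 * (wo + \sum_i wm i + ws)) = (Lr x k < 0).
  rewrite -subr_gt0.
  have -> : Cq x k + 2 * (-1) * Lr x k + (-1) ^+ 2 * (wo + \sum_i wm i + ws) -
    (Cq x k + 2 * 1%:~R * Lr x k + 1%:~R ^+ 2 * (wo + \sum_i wm i + ws)) = - (4 * Lr x k).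
    by rewrite (_ : 1%:~R = 1 :> R) //; ring.
  by rewrite oppr_gt0 pmulr_rlt0.
by [].
Qed.

Lemma key_sign (x : state m) (k : stratum m) :
  (2 * prob1 wo ws wm pb qb x k - 1) * Lr x k = - (pb - qb) * `|Lr x k|.
Proof.
have hp : pb = 1 - qb by rewrite -hpq addrK.
have e : 2 * pb - 1 = pb - qb by rewrite -[X in _ - X]hpq; ring.
have e2 : 2 * qb - 1 = - (pb - qb) by rewrite -[X in _ - X]hpq; ring.
rewrite prob1E; have [h|h|h] := ltrgtP (Lr x k) 0.
- by rewrite ltr0_norm // e; ring.
- by rewrite gtr0_norm // e2.
- by rewrite h normr0 !mulr0.
Qed.

Lemma prob1_ge0 (x : state m) (k : stratum m) : 0 <= prob1 wo ws wm pb qb x k.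
Proof.
have h1 := ltW hq0. have h2 := ltW hqp.
rewrite prob1E; case: ifP => _ //; case: ifP => _; [exact: le_trans h2|lra].
Qed.
Lemma prob1_le1 (x : state m) (k : stratum m) : prob1 wo ws wm pb qb x k <= 1.
Proof.
have h1 := ltW hp1. have h2 := ltW hqp.
rewrite prob1E; case: ifP => _; [exact: le_trans h1|case: ifP => _ //; lra].
Qed.

Definition V (x : state m) : R :=
  wo * (Dall x)%:~R ^+ 2 + \sum_i wm i * \sum_(l : 'I_(m i)) (Dmarg x l)%:~R ^+ 2
  + ws * \sum_k (x k)%:~R ^+ 2.

Lemma V_ge0 (x : state m) : 0 <= V x.
Proof.
rewrite /V; apply: addr_ge0; [apply: addr_ge0|].
- by apply: mulr_ge0 => //; apply: sqr_ge0.
- apply: sumr_ge0 => i _; apply: mulr_ge0 => //; apply: sumr_ge0 => l _; apply: sqr_ge0.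
- by apply: mulr_ge0 => //; apply: sumr_ge0 => l _; apply: sqr_ge0.
Qed.

Lemma sum_sq_shift (T : finType) (f : T -> int) (t : T) (s : int) :
  s%:~R ^+ 2 = 1 :> R ->
  \sum_u ((f u + (if u == t then s else 0))%:~R : R) ^+ 2 =
  \sum_u (f u)%:~R ^+ 2 + 2 * s%:~R * (f t)%:~R + 1.
Proof.
move=> hs.
rewrite (bigD1 t) //= [in RHS](bigD1 t) //= eqxx.
rewrite (eq_bigr (fun u => (f u)%:~R ^+ 2)); last first.
  by move=> u /negbTE ->; rewrite addr0.
rewrite intrD sqrrD hs; ring.
Qed.

Lemma V_step (x : state m) (k : stratum m) (b : bool) :
  V (step x k b) = V x + 2 * (sz b)%:~R * Lr x k + 1.
Proof.
rewrite /V /Lr Dall_step.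
under eq_bigr do under eq_bigr do rewrite Dmarg_step.
under [X in _ + ws * X]eq_bigr do rewrite stepE.
rewrite sum_sq_shift ?sz2 //.
under eq_bigr do rewrite sum_sq_shift ?sz2 //.
have -> : \sum_i wm i * (\sum_(l : 'I_(m i)) (Dmarg x l)%:~R ^+ 2
       + 2 * (sz b)%:~R * (Dmarg x (k i))%:~R + 1) =
  \sum_i wm i * \sum_(l : 'I_(m i)) (Dmarg x l)%:~R ^+ 2
  + 2 * (sz b)%:~R * \sum_i wm i * (Dmarg x (k i))%:~R + \sum_i wm i.
  rewrite !mulr_sumr -!big_split /=; apply: eq_bigr => i _; ring.
rewrite intrD.
have e : forall a : R, (a + (sz b)%:~R) ^+ 2 = a ^+ 2 + 2 * (sz b)%:~R * a + 1.
  by move=> a; rewrite sqrrD sz2; ring.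
rewrite e -[X in _ = _ + X]hw1; ring.
Qed.

Local Notation w := (trans_w pr wo ws wm pb qb).

Lemma w_ge0 (x : state m) k b : 0 <= w x k b.
Proof.
rewrite /trans_w; apply: mulr_ge0 => //; case: b; first exact: prob1_ge0.
by rewrite subr_ge0; apply: prob1_le1.
Qed.

Lemma w_sum (x : state m) : \sum_k \sum_b w x k b = 1.
Proof.
rewrite -hpr1; apply: eq_bigr => k _.
by rewrite big_bool /= /trans_w -mulrDr addrC subrK mulr1.
Qed.

Definition P (f : state m -> R) (x : state m) : R :=
  \sum_k \sum_b w x k b * f (step x k b).

Lemma PV (x : state m) :
  P V x = V x + 1 - 2 * (pb - qb) * \sum_k pr k * `|Lr x k|.
Proof.
rewrite /P.
transitivity (\sum_k (pr k * (V x + 1) - 2 * (pb - qb) * (pr k * `|Lr x k|))).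
  apply: eq_bigr => k _; rewrite big_bool /= /trans_w !V_step /=.
  have := key_sign x k.
  set p := prob1 wo ws wm pb qb x k; set L := Lr x k => hk.
  rewrite (_ : ((1 : int)%:~R : R) = 1) // (_ : ((-1 : int)%:~R : R) = -1) ?mulrN1z //.
  apply/eqP; rewrite -subr_eq0; apply/eqP.
  transitivity (2 * pr k * ((2 * p - 1) * L + (pb - qb) * `|L|)); first ring.
  by rewrite hk mulNr addNr mulr0.
by rewrite sumrB -mulr_suml hpr1 mul1r -mulr_sumr.
Qed.

Lemma PV_le (x : state m) : P V x <= V x + 1.
Proof.
rewrite PV lerBlDr lerDl; apply: mulr_ge0; first by rewrite pmulr_rge0 // subr_ge0 ltW.
by apply: sumr_ge0 => k _; apply: mulr_ge0.
Qed.

Lemma P_addC (f : state m -> R) (c : R) x : P (fun z => f z + c) x = P f x + c.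
Proof.
rewrite /P -[c in RHS]mul1r -(w_sum x) mulr_suml -big_split /=.
apply: eq_bigr => k _; rewrite mulr_suml -big_split /=.
by apply: eq_bigr => b _; rewrite mulrDr.
Qed.

Variable y : state m.

Definition Pav (f : state m -> R) (x : state m) : R :=
  \sum_k \sum_b w x k b * (if step x k b == y then 0 else f (step x k b)).

Definition inC (z : state m) : Prop := forall k, pr k = 0 -> z k = y k.

Lemma step_inC (x : state m) k b : inC x -> w x k b != 0 -> inC (step x k b).
Proof.
move=> hx hw k' hk'; rewrite stepE; case: eqP => [e|_]; last by rewrite addr0 hx.
by move: hw; rewrite /trans_w -e hk' mul0r eqxx.
Qed.

Lemma Pav_mono (f g : state m -> R) x : inC x ->
  (forall z, inC z -> z != y -> f z <= g z) ->
  Pav f x <= Pav g x.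
Proof.
move=> hx hfg; apply: ler_sum => k _; apply: ler_sum => b _.
have [->|hw] := eqVneq (w x k b) 0; first by rewrite !mul0r.
apply: ler_wpM2l; first exact: w_ge0.
case: ifP => // hz; apply: hfg; [exact: step_inC| by rewrite hz].
Qed.

Lemma Pav_ext (f g : state m -> R) x : (forall z, f z = g z) -> Pav f x = Pav g x.
Proof. by move=> e; apply: eq_bigr => k _; apply: eq_bigr => b _; rewrite e. Qed.

Lemma Pav_le_c (f : state m -> R) (c : R) x : 0 <= c -> (forall z, f z <= c) ->
  Pav f x <= c.
Proof.
move=> c0 hf; apply: (@le_trans _ _ (\sum_k \sum_b w x k b * c)).
  apply: ler_sum => k _; apply: ler_sum => b _; apply: ler_wpM2l; first exact: w_ge0.
  by case: ifP.
under eq_bigr do rewrite -mulr_suml.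
by rewrite -mulr_suml w_sum mul1r.
Qed.

Lemma Pav_ge0 (f : state m -> R) x : (forall z, 0 <= f z) -> 0 <= Pav f x.
Proof.
move=> hf; apply: sumr_ge0 => k _; apply: sumr_ge0 => b _.
by apply: mulr_ge0; [exact: w_ge0| case: ifP].
Qed.

Lemma Pav_le_P (f : state m -> R) x : (forall z, 0 <= f z) -> Pav f x <= P f x.
Proof.
move=> hf; apply: ler_sum => k _; apply: ler_sum => b _.
by apply: ler_wpM2l; [exact: w_ge0| case: ifP].
Qed.

Lemma Pav_lin (f g : state m -> R) (a : R) x :
  Pav (fun z => f z + a * g z) x = Pav f x + a * Pav g x.
Proof.
rewrite /Pav mulr_sumr -big_split; apply: eq_bigr => k _.
rewrite mulr_sumr -big_split; apply: eq_bigr => b _.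
case: ifP => _ /=; ring.
Qed.

Lemma Pav_sum (n : nat) (F : nat -> state m -> R) x :
  Pav (fun z => \sum_(j < n) F j z) x = \sum_(j < n) Pav (F j) x.
Proof.
elim: n => [|n IH].
  rewrite big_ord0 (Pav_ext _ (fun z => 0 + 0 * 0)); last by move=> z; rewrite big_ord0 mul0r addr0.
  by rewrite Pav_lin mul0r addr0; apply/eqP; rewrite eq_le Pav_le_c // Pav_ge0.
rewrite (Pav_ext _ (fun z => \sum_(j < n) F j z + 1 * F n z)); last first.
  by move=> z; rewrite big_ord_recr /= mul1r.
by rewrite Pav_lin IH mul1r big_ord_recr.
Qed.

Definition sv (j : nat) : state m -> R := iter j Pav (fun _ => 1).

Fixpoint hh (K : nat) : state m -> R :=
  match K with 0 => fun _ => 0 | K'.+1 => fun x => 1 + Pav (hh K') x end.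

Lemma sv_ge0 j x : 0 <= sv j x.
Proof. elim: j x => [|j IH] x /=; [exact: ler01| exact: Pav_ge0]. Qed.

Lemma sv_le1 j x : sv j x <= 1.
Proof. elim: j x => [|j IH] x /=; [by []| exact: Pav_le_c]. Qed.

Lemma hh_sum K x : hh K x = \sum_(j < K) sv j x.
Proof.
elim: K x => [|K IH] x /=; first by rewrite big_ord0.
rewrite (Pav_ext _ (fun z => \sum_(j < K) sv j z)) // Pav_sum big_ord_recl.
by [].
Qed.

Lemma hh_ge0 K x : 0 <= hh K x.
Proof. rewrite hh_sum; apply: sumr_ge0 => j _; exact: sv_ge0. Qed.

Lemma hh_le K x : hh K x <= K%:R.
Proof.
elim: K x => [|K IH] x /=; first by [].
rewrite mulrSr addrC lerD2r; apply: Pav_le_c => //.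
Qed.

Lemma Pav_addc (g : state m -> R) (c : R) x : 0 <= c ->
  Pav (fun z => c + g z) x <= c + Pav g x.
Proof.
move=> c0.
rewrite (Pav_ext _ (fun z => g z + c * (fun _ => 1) z)); last by move=> z; rewrite mulr1 addrC.
rewrite Pav_lin addrC lerD2r -[X in _ <= X]mulr1; apply: ler_wpM2l => //.
exact: Pav_le_c.
Qed.

Lemma unroll K R0 x : inC x -> hh (K + R0) x <= R0%:R + iter R0 Pav (hh K) x.
Proof.
elim: R0 x => [|R0 IH] x hx; first by rewrite addn0 add0r.
rewrite addnS /=.
apply: (@le_trans _ _ (1 + (R0%:R + Pav (iter R0 Pav (hh K)) x))); last first.
  by rewrite mulrS addrA.
rewrite lerD2l; apply: le_trans (Pav_addc _ _ _ (ler0n _ _)).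
by apply: Pav_mono => // z hz _; apply: IH.
Qed.

Lemma iterV R0 x : inC x -> iter R0 Pav V x <= V x + R0%:R.
Proof.
elim: R0 x => [|R0 IH] x hx; first by rewrite addr0.
apply: (@le_trans _ _ (Pav (fun z => V z + R0%:R) x)).
  by apply: Pav_mono => // z hz _; apply: IH.
apply: le_trans (Pav_le_P _ _ _) _.
  by move=> z; apply: addr_ge0; [exact: V_ge0| exact: ler0n].
rewrite P_addC mulrSr; have := PV_le x; lra.
Qed.

Lemma iter_lin n (f g : state m -> R) (a : R) x :
  iter n Pav (fun z => f z + a * g z) x = iter n Pav f x + a * iter n Pav g x.
Proof.
elim: n x => [|n IH] x //=.
by rewrite (Pav_ext _ (fun z => iter n Pav f z + a * iter n Pav g z)) ?Pav_lin.
Qed.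


Definition dist (x : state m) : nat := \sum_k `|x k - y k|%N.

Lemma dist0 (x : state m) : dist x = 0%N -> x = y.
Proof.
move=> h; apply/ffunP => k; apply/eqP; rewrite -subr_eq0 -absz_eq0; apply/eqP.
by move: h; rewrite /dist (bigD1 k) //= => /eqP; rewrite addn_eq0 => /andP[/eqP -> _].
Qed.

Lemma exists_diff (x : state m) : x != y -> exists k, x k != y k.
Proof.
move=> hxy; case: (pickP (fun k => x k != y k)) => [k hk|h]; first by exists k.
by move/eqP: hxy; case; apply/ffunP => k; move: (h k) => /negbFE/eqP.
Qed.

Lemma step_inC' (x : state m) k b : inC x -> pr k != 0 -> inC (step x k b).
Proof.
move=> hx hk k' hk'; rewrite stepE; case: eqP => [e|_]; last by rewrite addr0 hx.
by move: hk; rewrite -e hk' eqxx.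
Qed.

Lemma absz_up (a c : int) : (a < c)%R -> (`|(a + 1)%R - c|%N + 1 = `|a - c|%N)%N.
Proof. move=> h; lia. Qed.
Lemma absz_dn (a c : int) : ~~ (a < c)%R -> a != c ->
  (`|(a + -1)%R - c|%N + 1 = `|a - c|%N)%N.
Proof. move=> h h'; lia. Qed.

Lemma step_dist (x : state m) k : x k != y k ->
  (dist (step x k (x k < y k)%R) + 1 = dist x)%N.
Proof.
move=> hk; rewrite /dist (bigD1 k) //= [in RHS](bigD1 k) //= stepE eqxx.
rewrite (eq_bigr (fun k' => `|x k' - y k'|%N)); last first.
  by move=> k' /negbTE hk'; rewrite stepE hk' addr0.
rewrite addnAC; congr (_ + _)%N.
case: (boolP (x k < y k)%R) => h /=; [exact: absz_up h| exact: absz_dn h hk].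
Qed.

Lemma sum_single (v : stratum m -> bool -> R) (x : state m) k0 b0 :
  (forall k b, v k b <= 1) ->
  \sum_k \sum_b w x k b * v k b <= 1 - w x k0 b0 * (1 - v k0 b0).
Proof.
move=> hv.
have e : \sum_k \sum_b w x k b * (1 - v k b) = 1 - \sum_k \sum_b w x k b * v k b.
  rewrite -[in RHS](w_sum x) -sumrB; apply: eq_bigr => k _; rewrite -sumrB.
  by apply: eq_bigr => b _; ring.
suff : w x k0 b0 * (1 - v k0 b0) <= \sum_k \sum_b w x k b * (1 - v k b) by lra.
have t0 : forall k b, 0 <= w x k b * (1 - v k b).
  by move=> k b; apply: mulr_ge0; [exact: w_ge0| rewrite subr_ge0].
rewrite (bigD1 k0) //= (bigD1 b0) //= -addrA lerDl.
by apply: addr_ge0; apply: sumr_ge0 => ? _ //; apply: sumr_ge0.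
Qed.

Lemma path_bound (eta : R) : 0 <= eta -> eta <= 1 ->
  (forall x k b, pr k != 0 -> eta <= w x k b) ->
  forall d j x, inC x -> x != y -> (dist x <= d)%N -> (d <= j)%N ->
  sv j x <= 1 - eta ^+ d.
Proof.
move=> e0 e1 hw; elim=> [|d IH] j x hx hxy hd hj.
  by move: hd; rewrite leqn0 => /eqP/dist0 e; rewrite e eqxx in hxy.
case: j hj => [|j] // hj.
have [k hk] := exists_diff _ hxy.
have hpk : pr k != 0 by apply/eqP => h0; rewrite (hx k h0) eqxx in hk.
rewrite /sv iterS -/(sv j) /Pav.
set b := x k < y k.
apply: le_trans (sum_single (fun k b => if step x k b == y then 0 else sv j (step x k b)) x k b _) _.
  by move=> k' b'; case: ifP => _; [exact: ler01| exact: sv_le1].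
rewrite lerD2l lerN2 exprS /=.
have hed : 0 <= eta ^+ d by exact: exprn_ge0.
apply: ler_pM => //; first exact: hw.
case: ifP => hz.
  by rewrite subr0; apply: exprn_ile1.
have := step_dist _ _ hk; rewrite -/b => hsd.
have hdz : (dist (step x k b) <= d)%N by move: hd; rewrite -hsd addn1 ltnS.
have := IH j _ (step_inC' x k b hx hpk) (negbT hz) hdz hj; lra.
Qed.


Lemma exists_pos : exists k0, pr k0 != 0.
Proof.
case: (pickP (fun k => pr k != 0)) => [k hk|h]; first by exists k.
move: hpr1; rewrite big1 => [/eqP|k _]; first by rewrite eq_sym oner_eq0.
by move: (h k) => /negbFE/eqP.
Qed.

Lemma p1_ge_q (x : state m) k : qb <= prob1 wo ws wm pb qb x k.
Proof.
have h1 := ltW hqp. have h2 : qb <= 1 / 2 by have := hqp; have := hpq; lra.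
by rewrite prob1E; case: ifP => _ //; case: ifP => _.
Qed.

Lemma p1_le_p (x : state m) k : prob1 wo ws wm pb qb x k <= pb.
Proof.
have h1 := ltW hqp. have h2 : 1 / 2 <= pb by have := hqp; have := hpq; lra.
by rewrite prob1E; case: ifP => _ //; case: ifP => _.
Qed.

Lemma pr_le1 k : pr k <= 1.
Proof.
rewrite -hpr1 (bigD1 k) //= lerDl; exact: sumr_ge0.
Qed.

Lemma eta_ex : exists eta : R,
  [/\ 0 < eta, eta <= 1 & forall x k b, pr k != 0 -> eta <= w x k b].
Proof.
have [k0 hk0] := exists_pos.
set S := \sum_(k | pr k != 0) (pr k)^-1.
have hpk : forall k, pr k != 0 -> 0 < pr k.
  by move=> k hk; rewrite lt_neqAle eq_sym hk hpr0.
have hS : forall k, pr k != 0 -> (pr k)^-1 <= S.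
  move=> k hk; rewrite /S (bigD1 k) //= lerDl; apply: sumr_ge0 => k' _.
  by rewrite invr_ge0.
have S0 : 0 < S by apply: lt_le_trans (hS k0 hk0); rewrite invr_gt0 hpk.
have hpm : forall k, pr k != 0 -> S^-1 <= pr k.
  move=> k hk; rewrite -[pr k]invrK lef_pV2 ?posrE ?invr_gt0 ?hpk //; exact: hS.
have S1 : 0 <= S^-1 by rewrite invr_ge0 ltW.
exists (qb * S^-1); split.
- by rewrite mulr_gt0 // invr_gt0.
- rewrite -[1]mulr1; apply: ler_pM => //; first exact: ltW.
    by apply: (le_trans (ltW hqp)); apply: ltW.
  by apply: le_trans (hpm _ hk0) (pr_le1 k0).
- move=> x k b hk; rewrite /trans_w [pr k * _]mulrC; apply: ler_pM => //; first exact: ltW.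
    by case: b => /=; [exact: p1_ge_q| rewrite lerBrDl -lerBrDr -hpq addrK p1_le_p].
  exact: hpm.
Qed.

Lemma Dall_add (a b : state m) : Dall [ffun k => a k + b k] = Dall a + Dall b.
Proof. by rewrite /Dall -big_split; apply: eq_bigr => k _; rewrite ffunE. Qed.

Lemma Dmarg_add (a b : state m) i (l : 'I_(m i)) :
  Dmarg [ffun k => a k + b k] l = Dmarg a l + Dmarg b l.
Proof. by rewrite /Dmarg -big_split; apply: eq_bigr => k _; rewrite ffunE. Qed.

Lemma Lr_add (a b : state m) k : Lr [ffun k => a k + b k] k = Lr a k + Lr b k.
Proof.
rewrite /Lr Dall_add ffunE intrD.
under eq_bigr do rewrite Dmarg_add intrD.
have -> : \sum_i wm i * ((Dmarg a (k i))%:~R + (Dmarg b (k i))%:~R) =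
  \sum_i wm i * (Dmarg a (k i))%:~R + \sum_i wm i * (Dmarg b (k i))%:~R.
  by rewrite -big_split; apply: eq_bigr => i _; rewrite mulrDr.
ring.
Qed.

Lemma sumELr (E : state m) : \sum_k (E k)%:~R * Lr E k =
  wo * (Dall E)%:~R ^+ 2 + \sum_i wm i * \sum_k (E k)%:~R * (Dmarg E (k i))%:~R
  + ws * \sum_k (E k)%:~R ^+ 2.
Proof.
have hD : ((Dall E)%:~R : R) = \sum_k (E k)%:~R by rewrite /Dall rmorph_sum.
transitivity (\sum_k ((E k)%:~R * (wo * (Dall E)%:~R))
  + \sum_k \sum_i wm i * ((E k)%:~R * (Dmarg E (k i))%:~R)
  + \sum_k ws * (E k)%:~R ^+ 2).
  rewrite -!big_split; apply: eq_bigr => k _ /=.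
  rewrite /Lr !mulrDr mulr_sumr; congr (_ + _ + _); last by ring.
  by apply: eq_bigr => i _; ring.
rewrite -mulr_suml -hD exchange_big /= -mulr_sumr.
congr (_ + _ + _); first by ring.
by apply: eq_bigr => i _; rewrite mulr_sumr.
Qed.

Lemma marg_ge0 (E : state m) i : 0 <= \sum_k (E k)%:~R * ((Dmarg E (k i))%:~R : R).
Proof.
pose pp := fun k : stratum m => k i.
rewrite (partition_big pp xpredT) //=.
apply: sumr_ge0 => l _.
rewrite (eq_bigr (fun k => (E k)%:~R * (Dmarg E l)%:~R)); last by move=> k /eqP <-.
rewrite -mulr_suml.
set S := \sum_(k | _) _.
have -> : S = (Dmarg E l)%:~R by rewrite /S /Dmarg rmorph_sum.
by rewrite -expr2 sqr_ge0.
Qed.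

Lemma marg_single (E : state m) (i0 : 'I_I) (hall : forall i : 'I_I, i = i0) (k : stratum m) (i : 'I_I) :
  Dmarg E (k i) = E k.
Proof.
rewrite /Dmarg (big_pred1 k) // => k' /=.
apply/eqP/eqP => [h|->//]; apply/ffunP => i'.
move: h; rewrite (hall i) (hall i') //.
Qed.

Lemma c_pos (hI : (0 < I)%N) (hm : forall i, (1 < m i)%N)
  (hu : ustar m wo wm < 1 / 2) :
  0 < ws \/ exists i0, 0 < wm i0 /\ forall i : 'I_I, i = i0.
Proof.
set t := fun S : {set 'I_I} =>
  (wo + \sum_(j : 'I_I | j \notin S) wm j) * \prod_(u in S) ((m u).-1)%:R.
have t0 : forall S, 0 <= t S :> R.
  move=> S; apply: mulr_ge0; first by apply: addr_ge0 => //; apply: sumr_ge0.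
  by apply: prodr_ge0 => u _; apply: ler0n.
have t_ge : forall i, 1 - ws - wm i <= t [set i].
  move=> i; rewrite /t big_set1.
  have h1 : 1 <= ((m i).-1)%:R :> R.
    by rewrite ler1n; have := hm i; case: (m i) => [|[|n]].
  have e : wo + \sum_(j | j \notin [set i]) wm j = 1 - ws - wm i.
    rewrite (eq_bigl (fun j => j != i)); last by move=> j; rewrite finset.in_set1.
    move: hw1; rewrite (bigD1 i) //=; lra.
  rewrite e; apply: ler_peMr => //; rewrite -e; apply: addr_ge0 => //; exact: sumr_ge0.
have us : ustar m wo wm = \sum_(S : {set 'I_I} | S != finset.set0) t S by [].
have s1 : forall i : 'I_I, [set i] != finset.set0.
  by move=> i; apply/eqP => /setP /(_ i); rewrite finset.in_set1 eqxx finset.in_set0.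
case: (boolP (0 < ws)) => [h|h]; first by left.
have ws0 : ws = 0 by apply/eqP; move: h; rewrite lt_neqAle hws andbT negbK eq_sym.
right; set i0 : 'I_I := Ordinal hI.
case: (ltnP 1 I) => hI2.
  exfalso; set i1 : 'I_I := Ordinal hI2.
  have ne : i1 != i0 by [].
  have hsum : t [set i0] + t [set i1] <= ustar m wo wm.
    rewrite us (bigD1 [set i0]) ?s1 //= (bigD1 [set i1]) /=; last first.
      rewrite s1 /=; apply/eqP => /set1_inj/eqP; by rewrite (negbTE ne).
    by rewrite addrA lerDl; apply: sumr_ge0 => S _; exact: t0.
  have hwm2 : wm i0 + wm i1 <= \sum_i wm i.
    rewrite (bigD1 i0) //= (bigD1 i1) //= addrA lerDl; apply: sumr_ge0 => *; exact: hwm.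
  have := t_ge i0; have := t_ge i1; have := hw1; have := hwo; lra.
have hall : forall i : 'I_I, i = i0.
  by move=> i; apply: val_inj => /=; have := ltn_ord i; lia.
exists i0; split => //.
have hsum : t [set i0] <= ustar m wo wm.
  by rewrite us (bigD1 [set i0]) ?s1 //= lerDl; apply: sumr_ge0 => S _; exact: t0.
have := t_ge i0; have := hw1; lra.
Qed.


Lemma quad_lb (hI : (0 < I)%N) (hm : forall i, (1 < m i)%N)
  (hu : ustar m wo wm < 1 / 2) :
  exists c, 0 < c /\ forall E : state m,
    c * \sum_k ((E k)%:~R : R) ^+ 2 <= \sum_k (E k)%:~R * Lr E k.
Proof.
case: (c_pos hI hm hu) => [h|[i0 [h hall]]].
  exists ws; split => // E; rewrite sumELr lerDr; apply: addr_ge0.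
    by apply: mulr_ge0 => //; apply: sqr_ge0.
  by apply: sumr_ge0 => i _; apply: mulr_ge0 => //; apply: marg_ge0.
exists (wm i0); split => // E; rewrite sumELr.
have e : \sum_k ((E k)%:~R : R) * (Dmarg E (k i0))%:~R = \sum_k (E k)%:~R ^+ 2.
  by apply: eq_bigr => k _; rewrite (marg_single E _ hall) expr2.
have h1 : wm i0 * \sum_k ((E k)%:~R : R) ^+ 2 <=
    \sum_i wm i * \sum_k (E k)%:~R * (Dmarg E (k i))%:~R.
  rewrite (bigD1 i0) //= e lerDl; apply: sumr_ge0 => i _; apply: mulr_ge0 => //.
  exact: marg_ge0.
have h2 : 0 <= wo * (Dall E)%:~R ^+ 2 by apply: mulr_ge0 => //; apply: sqr_ge0.
have h3 : 0 <= ws * \sum_k ((E k)%:~R : R) ^+ 2.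
  by apply: mulr_ge0 => //; apply: sumr_ge0 => k _; apply: sqr_ge0.
lra.
Qed.

Lemma drift_bound (c : R) (c0 : 0 < c)
  (hc : forall E : state m, c * \sum_k ((E k)%:~R : R) ^+ 2 <= \sum_k (E k)%:~R * Lr E k) :
  exists D : nat, forall x, inC x -> V x - 1 < P V x -> (dist x <= D)%N.
Proof.
have [k0 hk0] := exists_pos.
set Pinv := \sum_(k | pr k != 0) (pr k)^-1.
set Ky := \sum_k `|Lr y k|.
have Pinv0 : 0 <= Pinv by apply: sumr_ge0 => k _; rewrite invr_ge0.
have Ky0 : 0 <= Ky by apply: sumr_ge0 => k _.
have pq0 : 0 < pb - qb by rewrite subr_gt0.
set B := (Pinv / (pb - qb) + Ky) / c.
have B0 : 0 <= B.
  apply: divr_ge0 (ltW c0); apply: addr_ge0 => //; apply: divr_ge0 => //; exact: ltW.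
exists (#|stratum m| * Num.Def.archi_bound B)%N => x hx hdr.
set E : state m := [ffun k => x k - y k].
have hE0 : forall k, pr k = 0 -> E k = 0 by move=> k hk; rewrite ffunE hx // subrr.
have hxE : forall k, Lr x k = Lr E k + Lr y k.
  by move=> k; rewrite -Lr_add; congr Lr; apply/ffunP => k'; rewrite !ffunE subrK.
set S := \sum_k pr k * `|Lr x k|.
have hS : (pb - qb) * S < 1.
  move: hdr; rewrite PV -/S -mulrA; set T := (pb - qb) * S; lra.
have S0 : 0 <= S by apply: sumr_ge0 => k _; apply: mulr_ge0.
have hcard : (0 < #|stratum m|)%N by apply/card_gt0P; exists k0.
have [kmax hmax] := bigop.eq_bigmax (fun k => `|E k|%N) hcard.
set mu := `|E kmax|%N.
have hle : forall k, (`|E k| <= mu)%N by move=> k; rewrite /mu -hmax; exact: leq_bigmax.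
have q1 : c * (mu%:R) ^+ 2 <= c * \sum_k ((E k)%:~R : R) ^+ 2.
  rewrite ler_pM2l // (bigD1 kmax) //= -[X in X <= _]addr0 lerD //; last first.
    by apply: sumr_ge0 => k _; apply: sqr_ge0.
  by rewrite /mu natr_absz intr_norm real_normK // num_real.
have q2 : \sum_k ((E k)%:~R : R) * Lr E k <= mu%:R * \sum_(k | pr k != 0) `|Lr E k|.
  rewrite mulr_sumr [X in X <= _](bigID (fun k => pr k != 0)) /=.
  rewrite [X in _ + X <= _]big1 ?addr0; last first.
    by move=> k /negbNE/eqP h; rewrite hE0 // mulr0z mul0r.
  apply: ler_sum => k _; apply: le_trans (ler_norm _) _.
  rewrite normrM ler_wpM2r // -intr_norm -natr_absz ler_nat; exact: hle.
have q3 : \sum_(k | pr k != 0) `|Lr E k| <= Pinv * S + Ky.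
  apply: (@le_trans _ _ (\sum_(k | pr k != 0) (Pinv * (pr k * `|Lr x k|) + `|Lr y k|))).
    apply: ler_sum => k hk.
    have -> : Lr E k = Lr x k - Lr y k by rewrite hxE addrK.
    apply: le_trans (ler_normB _ _) _; rewrite lerD2r.
    have hinv : (pr k)^-1 <= Pinv.
      by rewrite /Pinv (bigD1 k) //= lerDl; apply: sumr_ge0 => k' _; rewrite invr_ge0.
    rewrite -[X in X <= _]mul1r -(mulVf hk) -mulrA; apply: ler_wpM2r => //.
    by apply: mulr_ge0.
  rewrite big_split /= -mulr_sumr lerD //.
    apply: ler_wpM2l => //; rewrite /S [X in _ <= X](bigID (fun k => pr k != 0)) /= lerDl.
    by apply: sumr_ge0 => k _; apply: mulr_ge0.
  rewrite /Ky [X in _ <= X](bigID (fun k => pr k != 0)) /= lerDl.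
  by apply: sumr_ge0.
have h5 : Pinv * S <= Pinv / (pb - qb).
  by rewrite ler_pdivlMr // -mulrA (mulrC S) ler_piMr // ltW.
have hX : c * mu%:R <= Pinv / (pb - qb) + Ky.
  case: (posnP mu) => [->|mu0].
    by rewrite mulr0 addr_ge0 // divr_ge0 // ltW.
  have mu0' : (0 : R) < mu%:R by rewrite ltr0n.
  rewrite -(ler_pM2r mu0') -mulrA -expr2.
  apply: le_trans (le_trans q1 (le_trans (hc E) q2)) _.
  rewrite mulrC; apply: ler_wpM2r; first exact: ler0n.
  by apply: le_trans q3 _; rewrite lerD2r.
have hmu : (mu%:R : R) <= B by rewrite /B ler_pdivlMr // mulrC.
have hb := archi_boundP B0.
have hmub : (mu < Num.Def.archi_bound B)%N by rewrite -(ltr_nat R); exact: le_lt_trans hmu hb.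
rewrite /dist; apply: (@leq_trans (\sum_(k : stratum m) mu)).
  by apply: leq_sum => k _; have := hle k; rewrite /E ffunE.
by rewrite sum_nat_const leq_mul2l ltnW ?orbT.
Qed.

Lemma Pav_mono_all (f g : state m -> R) x : (forall z, f z <= g z) -> Pav f x <= Pav g x.
Proof.
move=> hfg; apply: ler_sum => k _; apply: ler_sum => b _.
by apply: ler_wpM2l; [exact: w_ge0| case: ifP].
Qed.

Lemma iter_mono n (f g : state m -> R) x : inC x -> x != y ->
  (forall z, inC z -> z != y -> f z <= g z) -> iter n Pav f x <= iter n Pav g x.
Proof.
elim: n x => [|n IH] x hx hxy hfg /=; first exact: hfg.
apply: Pav_mono => // z hz hzy; exact: IH.
Qed.

Lemma claim (D : nat) (hD : forall x, inC x -> V x - 1 < P V x -> (dist x <= D)%N)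
  (eta : R) (e0 : 0 < eta) (e1 : eta <= 1)
  (hw : forall x k b, pr k != 0 -> eta <= w x k b) :
  forall K x, inC x -> x != y ->
    hh K x <= V x + (2 * (D.+1)%:R / eta ^+ D.+1 + (D.+1)%:R).
Proof.
set R0 := D.+1; set A := 2 * R0%:R / eta ^+ R0 + R0%:R.
have d0 : 0 < eta ^+ R0 by exact: exprn_gt0.
have dn0 : eta ^+ R0 != 0 by rewrite gt_eqF.
have A0 : (R0%:R : R) <= A.
  rewrite /A lerDr; apply: divr_ge0 (ltW d0); by apply: mulr_ge0.
have A0' : 0 <= A by exact: le_trans (ler0n _ _) A0.
have hA : 2 * R0%:R <= A * eta ^+ R0.
  rewrite /A (mulrDl (2 * R0%:R / eta ^+ R0)) divfK // lerDl; apply: mulr_ge0 (ltW d0); exact: ler0n.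
elim/ltn_ind => K IH x hx hxy.
have V0 := V_ge0 x.
case: (boolP (P V x <= V x - 1)) => hdr.
  case: K IH => [|K] IH /=; first by apply: addr_ge0.
  apply: (@le_trans _ _ (1 + Pav (fun z => V z + A) x)).
    by rewrite lerD2l; apply: Pav_mono => // z hz hzy; exact: IH.
  apply: (@le_trans _ _ (1 + P (fun z => V z + A) x)).
    rewrite lerD2l; apply: Pav_le_P => z; apply: addr_ge0 => //; exact: V_ge0.
  by rewrite P_addC; move: hdr; lra.
rewrite -ltNge in hdr.
have hdx := hD x hx hdr.
case: (ltnP K R0) => hK.
  apply: le_trans (hh_le K x) _.
  have : (K%:R : R) <= R0%:R by rewrite ler_nat ltnW.
  move: A0; lra.
have hKK : (K - R0 < K)%N by move: hK; rewrite /R0; clear; lia.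
have h1 : iter R0 Pav (hh (K - R0)) x <= iter R0 Pav (fun z => V z + A * (fun _ => 1) z) x.
  apply: iter_mono => // z hz hzy; rewrite mulr1; exact: IH.
rewrite iter_lin in h1.
change (iter R0 Pav (fun _ => 1) x) with (sv R0 x) in h1.
have h2 := iterV R0 x hx.
have h3 : sv R0 x <= 1 - eta ^+ R0.
  exact: (path_bound eta (ltW e0) e1 hw R0 R0 x hx hxy (leq_trans hdx (leqnSn D)) (leqnn R0)).
have h4 : A * sv R0 x <= A * (1 - eta ^+ R0) by apply: ler_wpM2l.
have h0 := unroll (K - R0) R0 x hx.
rewrite subnK in h0 => //.
move: h0 h1 h2 h4 hA; lra.
Qed.

Lemma fpass_ge0 n x : 0 <= fpass pr wo ws wm pb qb n x y.
Proof.
elim: n x => [|n IH] x //=.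
apply: sumr_ge0 => k _; apply: sumr_ge0 => b _; apply: mulr_ge0; first exact: w_ge0.
by case: ifP => _; [exact: ler0n| exact: IH].
Qed.

Lemma fpass_sv N x : \sum_(n < N.+1) fpass pr wo ws wm pb qb n x y = 1 - sv N x.
Proof.
elim: N x => [|N IH] x.
  by rewrite big_ord1 /= subrr.
rewrite big_ord_recl /= add0r.
transitivity (\sum_k \sum_b w x k b *
   (if step x k b == y then 1 else 1 - sv N (step x k b))).
  rewrite exchange_big /=; apply: eq_bigr => k _.
  rewrite exchange_big /=; apply: eq_bigr => b _.
  rewrite -mulr_sumr; congr (_ * _).
  case: (step x k b == y).
    by rewrite big_ord_recl /= big1 ?addr0.
  exact: IH.
rewrite /Pav -/(sv N) -[1 in RHS](w_sum x) -sumrB; apply: eq_bigr => k _.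
rewrite -sumrB; apply: eq_bigr => b _.
by case: ifP => _; ring.
Qed.

Lemma sv_anti j x : sv j.+1 x <= sv j x.
Proof.
elim: j x => [|j IH] x; first exact: Pav_le_c.
exact: Pav_mono_all.
Qed.

Lemma sv_mono j k x : (j <= k)%N -> sv k x <= sv j x.
Proof.
move=> hjk; rewrite -(subnKC hjk); elim: (k - j)%N => [|d IH]; first by rewrite addn0.
by rewrite addnS; apply: le_trans (sv_anti _ _) IH.
Qed.


Lemma hh_y_bound (D : nat) (hD : forall x, inC x -> V x - 1 < P V x -> (dist x <= D)%N)
  (eta : R) (e0 : 0 < eta) (e1 : eta <= 1)
  (hw : forall x k b, pr k != 0 -> eta <= w x k b) :
  exists H, forall K, hh K y <= H.
Proof.
set A := 2 * (D.+1)%:R / eta ^+ D.+1 + (D.+1)%:R.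
have A0 : 0 <= A.
  apply: addr_ge0 (ler0n _ _); apply: divr_ge0.
    by apply: mulr_ge0 => //; exact: ler0n.
  by apply: exprn_ge0; exact: ltW.
have hPV0 : 0 <= P V y.
  by apply: sumr_ge0 => k _; apply: sumr_ge0 => b _; apply: mulr_ge0; [exact: w_ge0| exact: V_ge0].
exists (1 + P V y + A); case => [|K] /=.
  by apply: addr_ge0 => //; apply: addr_ge0.
rewrite -addrA lerD2l.
have hyC : inC y by move=> k _.
apply: (@le_trans _ _ (Pav (fun z => V z + A) y)).
  by apply: Pav_mono => // z hz hzy; exact: (claim D hD eta e0 e1 hw).
apply: le_trans (Pav_le_P _ _ _) _.
  by move=> z; apply: addr_ge0 => //; exact: V_ge0.
by rewrite P_addC.
Qed.

Lemma pos_rec_y (hI : (0 < I)%N) (hm : forall i, (1 < m i)%N)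
  (hu : ustar m wo wm < 1 / 2) : pos_recurrent_state pr wo ws wm pb qb y.
Proof.
have [c [c0 hc]] := quad_lb hI hm hu.
have [D hD] := drift_bound c c0 hc.
have [eta [e0 e1 hw]] := eta_ex.
have [H hH] := hh_y_bound D hD eta e0 e1 hw.
have H0 : 0 <= H by exact: le_trans (hH 0%N).
have svN : forall N, N.+1%:R * sv N y <= H.
  move=> N; apply: le_trans (hH N.+1); rewrite hh_sum.
  apply: (@le_trans _ _ (\sum_(j < N.+1) sv N y)).
    by rewrite sumr_const card_ord mulr_natl.
  by apply: ler_sum => j _; apply: sv_mono; rewrite -ltnS; exact: ltn_ord.
set f := fun n => fpass pr wo ws wm pb qb n y y.
have hf : forall N, \sum_(n < N.+1) f n = 1 - sv N y by move=> N; exact: fpass_sv.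
split.
  apply/cvgrPdist_le => e e0'.
  have he : 0 <= H / e by apply: divr_ge0 => //; exact: ltW.
  exists (Num.Def.archi_bound (H / e)).+1 => // N /= hN.
  case: N hN => [//|N] hN.
  rewrite seriesEord /= hf (_ : 1 - (1 - sv N y) = sv N y); last by ring.
  rewrite ger0_norm ?sv_ge0 //.
  have hb := archi_boundP he.
  have hb2 : H / e < N.+1%:R.
    by apply: lt_le_trans hb _; rewrite ler_nat; move: hN; clear; lia.
  rewrite ltr_pdivrMr // in hb2.
  have hN0 : (0 : R) < N.+1%:R by rewrite ltr0Sn.
  rewrite -(ler_pM2l hN0); apply: le_trans (svN N) _; exact: ltW.
apply: nondecreasing_is_cvgn.
  apply: nondecreasing_series => n _ _; apply: mulr_ge0; [exact: ler0n| exact: fpass_ge0].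
have ident : forall N, \sum_(n < N) n%:R * f n + N%:R * (1 - \sum_(n < N) f n) =
    \sum_(j < N) (1 - \sum_(n < j.+1) f n).
  elim=> [|N IH]; first by rewrite !big_ord0 mul0r addr0.
  rewrite !big_ord_recr /= -IH; ring.
exists H => _ [N _ <-].
have rN : 0 <= 1 - \sum_(n < N) f n.
  case: N => [|N]; first by rewrite big_ord0 subr0 ler01.
  by rewrite hf (_ : 1 - (1 - sv N y) = sv N y) ?sv_ge0 //; ring.
have e2 : \sum_(j < N) (1 - \sum_(n < j.+1) f n) = hh N y.
  by rewrite hh_sum; apply: eq_bigr => j _; rewrite hf; ring.
have := hH N; have := ident N; rewrite e2.
have : 0 <= N%:R * (1 - \sum_(n < N) f n) by apply: mulr_ge0 => //; exact: ler0n.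
rewrite seriesEord /=; lra.
Qed.

End Drift.

Theorem theorem2 (R : realType) (I : nat) (hI : (0 < I)%N)
  (m : 'I_I -> nat) (hm : forall i, (1 < m i)%N)
  (pr : stratum m -> R) (hpr0 : forall k, 0 <= pr k) (hpr1 : \sum_k pr k = 1)
  (wo ws : R) (wm : 'I_I -> R)
  (hwo : 0 <= wo) (hws : 0 <= ws) (hwm : forall i, 0 <= wm i)
  (hw1 : wo + \sum_i wm i + ws = 1)
  (pb qb : R) (hq0 : 0 < qb) (hqp : qb < pb) (hp1 : pb < 1) (hpq : pb + qb = 1)
  (hu : ustar m wo wm < 1 / 2) :
  positive_recurrent_chain pr wo ws wm pb qb.
Proof.
move=> y _; exact: pos_rec_y.
Qed.
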